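(* Let $n\in\mathbb{N}$ and let $\psi$ be an increasing concave function on $[0,\infty)$ with $\psi(0)=0$. The following are equivalent: (i) $\Lambda_\psi\cap L_\infty\not\subset L_{n,1}$; (ii) $\liminf_{t\to\infty}\psi(t)/t^{1/n}=0$; (iii) $\liminf_{m\to\infty}\psi(2^{mn})/2^m=0$.
   Context: For a measurable function $f$ on $(0,\infty)$, $\mu(f)$ is the decreasing rearrangement of $|f|$. The Lorentz space $\Lambda_\psi$ is the set of measurable $f$ on $(0,\infty)$ with $\|f\|_{\Lambda_\psi}=\int_0^\infty\mu(t;f)\,d\psi(t)<\infty$; $L_{n,1}=\Lambda_\psi$ with $\psi(t)=t^{1/n}$. In (i) the inclusion is set inclusion. *)

(* Defs.v *)
From HB Require Import structures.
From mathcomp Require Import all_boot all_order all_algebra.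
From mathcomp Require Import all_classical all_reals all_analysis.
Set Implicit Arguments. Unset Strict Implicit. Unset Printing Implicit Defensive.
Import Order.TTheory GRing.Theory Num.Def Num.Theory.
Import numFieldTopology.Exports.
Local Open Scope classical_set_scope.
Local Open Scope ring_scope.

(* The Lebesgue-Stieltjes measure d(psi) on (0,oo).                           *)
(* For psi nondecreasing and >= 0 on (0,oo), we use its right-continuous      *)
(* regularisation  t |-> psi(max(t,0)+)  (which coincides with psi on (0,oo)  *)
(* whenever psi is right-continuous there, e.g. concave); for other psi the   *)
(* construction is irrelevant (constant 0).                                   *)
Section psi_regularisation.
Variables (R : realType) (psi : R -> R).

Definition psi_ok : Prop :=
  {in `]0, +oo[ &, {homo psi : x y / x <= y}} /\ (forall s, 0 < s -> 0 <= psi s).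

Definition psi_reg (t : R) : R := inf [set psi s | s in `]Num.max t 0, +oo[].

Definition psiF : R -> R := if pselect psi_ok then psi_reg else cst 0.

Let S (t : R) := [set psi s | s in `]Num.max t 0, +oo[].

Let mr (t : R) : (0 : R) <= Num.max t 0. Proof. by rewrite le_max lexx orbT. Qed.
Let ml (t : R) : t <= Num.max t 0. Proof. by rewrite le_max lexx. Qed.

Let S_n0 (t : R) : S t !=set0.
Proof.
exists (psi (Num.max t 0 + 1)); exists (Num.max t 0 + 1) => //.
by rewrite /= in_itv /= andbT ltrDl.
Qed.

Let S_lb (t : R) : psi_ok -> has_lbound (S t).
Proof.
move=> [_ h0]; exists 0 => _ [s + <-]; rewrite /= in_itv /= andbT => hs.
apply: h0; apply: le_lt_trans hs; exact: mr.
Qed.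

Let reg_nd : psi_ok -> {homo psi_reg : x y / x <= y}.
Proof.
move=> ok x y xy; apply: lb_le_inf; first exact: S_n0.
move=> _ [s hs <-].
apply: (ge_inf (S_lb x ok)); exists s => //.
move: hs; rewrite /= !in_itv /= !andbT; apply: le_lt_trans.
by rewrite ge_max mr andbT (le_trans xy)// ml.
Qed.

Lemma psiF_nd : {homo psiF : x y / x <= y}.
Proof. rewrite /psiF; case: pselect => ok; first exact: reg_nd. by move=> x y _; rewrite lexx. Qed.

Lemma psiF_rc : forall x, psiF @ at_right x --> psiF x.
Proof.
rewrite /psiF; case: pselect => ok x; last exact: cvg_cst.
apply/cvgrPdist_lt => e e0.
have [_ [s hs <-] hse] := inf_adherent e0 (conj (S_n0 x) (S_lb x ok)).
have xs : x < s.
  by move: hs; rewrite /= in_itv /= andbT; apply: le_lt_trans; exact: ml.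
near=> t.
have xt : x < t by near: t; exact: nbhs_right_gt.
have ts : t < s by near: t; exact: nbhs_right_lt.
have h1 : psi_reg x <= psi_reg t by apply: reg_nd => //; exact: ltW.
have h2 : psi_reg t <= psi s.
  apply: (ge_inf (S_lb t ok)); exists s => //.
  rewrite /= in_itv /= andbT gt_max ts /=.
  by move: hs; rewrite /= in_itv /= andbT; apply: le_lt_trans; exact: mr.
rewrite ler0_norm ?subr_le0// opprB ltrBlDl.
exact: le_lt_trans h2 hse.
Unshelve. all: by end_near.
Qed.

HB.instance Definition _ := isCumulative.Build R _ R psiF psiF_nd psiF_rc.

End psi_regularisation.

(* Functions on (0,oo) are represented as f : R -> R; values at t <= 0 are    *)
(* ignored.                                                                   *)
Section lorentz.
Variable R : realType.
Local Open Scope ereal_scope.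

Definition distrib (f : R -> R) (s : R) : \bar R :=
  lebesgue_measure ([set t : R | (0 < t)%R] `&` [set t | (s < `|f t|)%R]).

Definition rearr (f : R -> R) (t : R) : \bar R :=
  ereal_inf [set s%:E | s in [set s : R | (0 <= s)%R /\ distrib f s <= t%:E]].

Definition lorentz_norm (psi : R -> R) (f : R -> R) : \bar R :=
  \int[lebesgue_stieltjes_measure (psiF psi)]_(t in `]0%R, +oo[) rearr f t.

Definition Lambda (psi : R -> R) : set (R -> R) :=
  [set f : R -> R | measurable_fun (`]0%R, +oo[ : set R) f /\ lorentz_norm psi f < +oo].

Definition Linfty : set (R -> R) :=
  [set f : R -> R | measurable_fun (`]0%R, +oo[ : set R) f /\
     exists M : R, lebesgue_measure
        ([set t : R | (0 < t)%R] `&` [set t | (M < `|f t|)%R]) = 0].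

Definition Ln1 (n : nat) : set (R -> R) := Lambda (fun t => t `^ (n%:R)^-1)%R.

End lorentz.
Arguments Linfty R : clear implicits.
Arguments Ln1 R n%_nat : clear implicits.

Definition concave_on_nonneg (R : realType) (psi : R -> R) : Prop :=
  forall x y a : R, 0 <= x -> 0 <= y -> 0 <= a -> a <= 1 ->
    a * psi x + (1 - a) * psi y <= psi (a * x + (1 - a) * y).

Section liminf_pinfty.
Variable R : realType.
Definition liminf_pinfty (f : R -> \bar R) : \bar R := limf_einf f (pinfty_nbhs R).
End liminf_pinfty.

(* Main.v *)
Require Import Defs.
From HB Require Import structures.
From mathcomp Require Import all_boot all_order all_algebra.
From mathcomp Require Import all_classical all_reals all_analysis measurable_realfun.
From mathcomp Require Import ring lra zify.
Import Order.TTheory GRing.Theory Num.Def Num.Theory.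
Import numFieldTopology.Exports.
Local Open Scope classical_set_scope.
Local Open Scope ring_scope.


Section liminf_char.
Context {R : realType}.
Local Open Scope ereal_scope.

Lemma ereal_le0_eps (x : \bar R) : (forall e : R, (0 < e)%R -> x < e%:E) -> x <= 0.
Proof.
move=> h; case: x h => [r| |] h //.
- rewrite lee_fin leNgt; apply/negP => r0.
  by have := h r r0; rewrite ltxx.
- by have := h 1%R ltr01.
Qed.

Lemma limf_einf0 (T : choiceType) (X : filteredType T) (F : set_system X) (u : X -> \bar R) :
  Filter F -> ~ F set0 ->
  F [set x | 0 <= u x] ->
  (limf_einf u F = 0 <-> forall e : R, (0 < e)%R -> forall V, F V -> exists x, V x /\ u x < e%:E).
Proof.
move=> FF F0 Fpos; rewrite limf_einfE; split.
- move=> h e e0 V FV.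
  have FW : F (V `&` [set x | 0 <= u x]) by exact: filterI.
  have H0 : ereal_inf (u @` (V `&` [set x | 0 <= u x])) <=
     ereal_sup [set ereal_inf (u @` V) | V in F].
    by apply: ereal_sup_ubound; exists (V `&` [set x | 0 <= u x]).
  rewrite h in H0.
  have : ereal_inf (u @` (V `&` [set x | 0 <= u x])) < e%:E.
    by apply: le_lt_trans H0 _; rewrite lte_fin.
  by move=> /ereal_inf_lt[_ [x [Vx _] <-]] ux; exists x.
- move=> h; apply/eqP; rewrite eq_le; apply/andP; split.
  + apply: ge_ereal_sup => _ [V FV <-].
    apply: ereal_le0_eps => e e0.
    have [x [Vx ux]] := h e e0 V FV.
    by apply: le_lt_trans ux; apply: ereal_inf_lbound; exists x.
  + apply: (@le_trans _ _ (ereal_inf (u @` [set x | 0 <= u x]))).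
      by apply: le_ereal_inf_tmp => _ [x ux <-].
    by apply: ereal_sup_ubound; exists [set x | 0 <= u x].
Qed.

Lemma liminf_pinfty0 (g : R -> R) :
  (forall t, (0 < t)%R -> (0 <= g t)%R) ->
  (liminf_pinfty (fun t => (g t)%:E) = 0 <->
   forall e : R, (0 < e)%R -> forall M : R, exists t, (M < t)%R /\ (g t < e)%R).
Proof.
move=> g0; rewrite /liminf_pinfty limf_einf0.
- split.
  + move=> h e e0 M.
    have [x [Mx gx]] := h e e0 [set x | (M < x)%R] (ex_intro _ M (conj (num_real M) (fun x (h : (M < x)%R) => h))).
    by exists x; split => //; rewrite -lte_fin.
  + move=> h e e0 V [M [_ MV]].
    have [t [Mt gt]] := h e e0 M.
    by exists t; split; [exact: MV|rewrite lte_fin].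
- by move=> [M [_ /(_ (M + 1)%R)]]; apply; rewrite ltrDl.
- by exists 0%R; split => // x x0 /=; rewrite lee_fin g0.
Qed.

Lemma limn_einf0 (h : nat -> R) :
  (forall m, (0 <= h m)%R) ->
  (limn_einf (fun m => (h m)%:E) = 0 <->
   forall e : R, (0 < e)%R -> forall N, exists m, (N <= m)%N /\ (h m < e)%R).
Proof.
move=> h0; rewrite /limn_einf /limn_esup -/(limf_einf _ _) limf_einf0.
- split.
  + move=> H e e0 N.
    have [x [Nx hx]] := H e e0 [set m | (N <= m)%N] (ltac:(exists N => //)).
    by exists x; split => //; rewrite -lte_fin.
  + move=> H e e0 V [N _ NV].
    have [m [Nm hm]] := H e e0 N.
    by exists m; split; [exact: NV|rewrite lte_fin].
- by move=> [N _ /(_ N (leqnn N))].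
- by exists 0%N => // m _ /=; rewrite lee_fin.
Qed.

End liminf_char.


Section pow2.
Context {R : realType}.

Lemma natr_lt_exp2 (k : nat) : (k%:R : R) < 2 ^+ k.
Proof. by rewrite -natrX ltr_nat ltn_expl. Qed.

Lemma exp2_gt0 (k : nat) : (0 : R) < 2 ^+ k.
Proof. by rewrite exprn_gt0. Qed.

Lemma exp2_le (a b : nat) : (a <= b)%N -> (2 ^+ a : R) <= 2 ^+ b.
Proof. by move=> ab; rewrite ler_eXn2l // ltr1n. Qed.

Lemma exp2_lt (a b : nat) : (a < b)%N -> (2 ^+ a : R) < 2 ^+ b.
Proof. by move=> ab; rewrite ltr_eXn2l // ltr1n. Qed.

Lemma pow_root (n m : nat) : (0 < n)%N -> (2 ^+ (m * n) : R) `^ (n%:R)^-1 = 2 ^+ m.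
Proof.
move=> n0; rewrite -powR_mulrn // -powRrM natrM -mulrA mulfV ?mulr1 ?powR_mulrn //.
by rewrite pnatr_eq0 -lt0n.
Qed.

Lemma root_gt0 (n : nat) (t : R) : 0 < t -> 0 < t `^ (n%:R)^-1.
Proof. by move=> t0; rewrite powR_gt0. Qed.

Lemma root_le (n : nat) (s t : R) : 0 <= s -> s <= t -> s `^ (n%:R)^-1 <= t `^ (n%:R)^-1.
Proof.
move=> s0 st; apply: ge0_ler_powR => //; rewrite ?invr_ge0 ?ler0n // nnegrE //.
exact: le_trans st.
Qed.

Lemma exists_exp2_gt (t : R) : exists k : nat, t < 2 ^+ k.
Proof.
exists (Num.bound `|t|); rewrite (le_lt_trans (ler_norm t)) //.
apply: lt_trans (natr_lt_exp2 _).
by rewrite archi_boundP.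
Qed.

End pow2.

Lemma part_ii_iii (R : realType) (n : nat) (psi : R -> R) :
  (0 < n)%N ->
  {in `[0, +oo[ &, {homo psi : x y / x <= y}} ->
  psi 0 = 0 ->
  (liminf_pinfty (fun t : R => (psi t / t `^ (n%:R)^-1)%:E) = 0%E <->
         limn_einf (fun m : nat => (psi (2 ^+ (m * n)) / 2 ^+ m)%:E) = 0%E).
Proof.
move=> n0 hpsi psi0.
have psi_ge0 t : 0 <= t -> 0 <= psi t.
  by move=> t0; rewrite -psi0 hpsi // in_itv /= ?lexx ?t0.
rewrite liminf_pinfty0; last first.
  by move=> t t0; rewrite divr_ge0 ?psi_ge0 ?ltW ?root_gt0.
rewrite limn_einf0; last first.
  by move=> m; rewrite divr_ge0 ?psi_ge0 ?exprn_ge0 // ltW.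
split.
- move=> H e e0 N.
  have [t [Mt gt]] := H (e / 2) (divr_gt0 e0 (ltr0Sn _ 1)) (2 ^+ (N * n)).
  have t0 : 0 < t by apply: lt_trans Mt; exact: exp2_gt0.
  have exk : exists k, t < 2 ^+ (k * n).
    have [k tk] := exists_exp2_gt t; exists k; apply: (lt_le_trans tk).
    by apply: exp2_le; rewrite leq_pmulr.
  case: (ex_minnP exk) => k tk kmin.
  have Nk : (N < k)%N.
    rewrite ltnNge; apply/negP => kN.
    have := @exp2_le R _ _ (leq_mul kN (leqnn n)) => /(lt_le_trans tk).
    by rewrite ltNge (ltW Mt).
  have k1 : k = k.-1.+1 by rewrite prednK // (leq_ltn_trans _ Nk).
  exists k.-1; split; first by rewrite -ltnS -k1.
  have tlo : 2 ^+ (k.-1 * n) <= t.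
    rewrite leNgt; apply/negP => /kmin; rewrite k1 ltnn; exact.
  have troot : t `^ (n%:R)^-1 <= 2 ^+ k.
    by rewrite -(@pow_root R n k n0) root_le // ltW.
  have ht : psi (2 ^+ (k.-1 * n)) <= psi t.
    by apply: hpsi; rewrite // in_itv /= andbT ?(ltW t0) // ltW // exp2_gt0.
  rewrite (@le_lt_trans _ _ (psi t / 2 ^+ k.-1)) //.
    by rewrite ler_pM2r ?invr_gt0 ?exp2_gt0.
  have : psi t / t `^ (n%:R)^-1 * 2 < e.
    by rewrite -ltr_pdivlMr.
  apply: le_lt_trans.
  rewrite k1 exprS in troot.
  have r0 := @root_gt0 R n t t0.
  have q0 := @exp2_gt0 R k.-1.
  rewrite (_ : psi t / 2 ^+ k.-1 = psi t / t `^ (n%:R)^-1 * (t `^ (n%:R)^-1 / 2 ^+ k.-1)); last first.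
    by rewrite mulrA divfK // gt_eqF.
  rewrite ler_wpM2l //; first by rewrite divr_ge0 ?psi_ge0 ?ltW.
  by rewrite ler_pdivrMr // mulrC.
- move=> H e e0 M.
  have [N MN] := exists_exp2_gt M.
  have [m [Nm hm]] := H e e0 N.
  exists (2 ^+ (m * n)); split; last by rewrite pow_root.
  apply: (lt_le_trans MN); apply: exp2_le.
  by rewrite (leq_trans Nm) // leq_pmulr.
Qed.


Section psiF_facts.
Context {R : realType} (psi : R -> R) (ok : psi_ok psi).

Lemma psiF_E : psiF psi = psi_reg psi.
Proof. by rewrite /psiF; case: pselect. Qed.

Let Sne t : [set psi s | s in `]Num.max t 0, +oo[] !=set0.
Proof.
exists (psi (Num.max t 0 + 1)); exists (Num.max t 0 + 1) => //.
by rewrite /= in_itv /= andbT ltrDl.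
Qed.

Let Slb t : has_lbound [set psi s | s in `]Num.max t 0, +oo[].
Proof.
case: ok => _ h0; exists 0 => _ [s + <-]; rewrite /= in_itv /= andbT => hs.
apply: h0; apply: le_lt_trans hs; by rewrite le_max lexx orbT.
Qed.

Lemma psiF_le t s : Num.max t 0 < s -> psiF psi t <= psi s.
Proof.
move=> ts; rewrite psiF_E; apply: (ge_inf (Slb t)); exists s => //.
by rewrite /= in_itv /= andbT.
Qed.

Lemma psiF_ge t : 0 < t -> psi t <= psiF psi t.
Proof.
move=> t0; rewrite psiF_E; apply: lb_le_inf => // _ [s + <-].
rewrite /= in_itv /= andbT => hs.
have ts : t < s by apply: le_lt_trans hs; rewrite le_max lexx.
case: ok => + _ => /(_ t s); apply.
- by rewrite in_itv /= andbT.
- by rewrite in_itv /= andbT (lt_trans t0 ts).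
- exact: ltW.
Qed.

Lemma psiF_ge0 t : 0 <= psiF psi t.
Proof.
rewrite psiF_E; apply: lb_le_inf => // _ [s + <-].
rewrite /= in_itv /= andbT => hs.
case: ok => _; apply; apply: le_lt_trans hs; by rewrite le_max lexx orbT.
Qed.

End psiF_facts.

Lemma ls_itv {R : realType} (F : cumulative R R) (a b : R) : a <= b ->
  lebesgue_stieltjes_measure F (`]a, b] : set R) = (F b - F a)%:E.
Proof.
move=> ab.
have -> : lebesgue_stieltjes_measure F (`]a, b] : set R) = wlength F `]a, b].
  rewrite /lebesgue_stieltjes_measure/= /measure_extension/=.
  by rewrite measurable_mu_extE//; exact: is_ocitv.
rewrite wlength_itv /=; case: ltP => [//|ba].
have -> : a = b by apply/eqP; rewrite eq_le ab -lee_fin ba.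
by rewrite subrr.
Qed.


Section rearr_facts.
Context {R : realType}.
Implicit Types (f : R -> R) (s t : R).
Local Open Scope ereal_scope.

Lemma rearr_ge0 f t : 0 <= rearr f t.
Proof. by apply: le_ereal_inf_tmp => _ [s [s0 _] <-]; rewrite lee_fin. Qed.

Lemma rearr_le f t s : (0 <= s)%R -> distrib f s <= t%:E -> rearr f t <= s%:E.
Proof. by move=> s0 ds; apply: ereal_inf_lbound; exists s. Qed.

Lemma rearr_ge f t s0 :
  (forall s, (0 <= s)%R -> (s < s0)%R -> t%:E < distrib f s) -> s0%:E <= rearr f t.
Proof.
move=> H; apply: le_ereal_inf_tmp => _ [s [s0' ds] <-].
rewrite lee_fin leNgt; apply/negP => ss0.
by have := H s s0' ss0; rewrite ltNge ds.
Qed.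

Lemma rearr_nonincr f t t' : (t <= t')%R -> rearr f t' <= rearr f t.
Proof.
move=> tt'; apply: ereal_inf_le_tmp => _ [s [s0 ds] <-]; exists s => //.
by split => //; apply: le_trans ds _; rewrite lee_fin.
Qed.

Lemma distrib_set_meas f s : measurable_fun (`]0%R, +oo[ : set R) f ->
  measurable ([set t : R | (0 < t)%R] `&` [set t | (s < `|f t|)%R]).
Proof.
move=> mf.
have := (measurableT_comp (@measurable_realfun.normr_measurable R setT) mf) (measurable_itv _) _ (measurable_itv `]s, +oo[%R).
congr measurable; apply/seteqP; split => x /=; rewrite !in_itv /= !andbT //.
Qed.

Lemma rearr_linfty f M : measurable_fun (`]0%R, +oo[ : set R) f ->
  lebesgue_measure ([set t : R | (0 < t)%R] `&` [set t | (M < `|f t|)%R]) = 0 ->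
  forall t, (0 <= t)%R -> rearr f t <= (Num.max M 0)%:E.
Proof.
move=> mf fM t t0; apply: rearr_le; first by rewrite le_max lexx orbT.
apply: (@le_trans _ _ 0); last by rewrite lee_fin.
rewrite -fM; apply: le_measure; rewrite ?inE; try exact: distrib_set_meas.
by move=> x [x0 /= h]; split => //; apply: le_lt_trans h; rewrite le_max lexx.
Qed.

Lemma rearr_meas f M : (forall t, (0 < t)%R -> rearr f t <= M%:E) ->
  measurable_fun (`]0%R, +oo[ : set R) (rearr f).
Proof.
move=> fM.
pose G t := if (0 < t)%R then fine (rearr f t) else M.
have finr t : (0 < t)%R -> rearr f t \is a fin_num.
  move=> t0; rewrite ge0_fin_numE ?rearr_ge0 //.
  by apply: le_lt_trans (fM t t0) _; rewrite ltey.
have Gni : nonincreasing_fun G.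
  move=> x y xy; rewrite /G; case: ifPn => x0; case: ifPn => y0 //.
  - by apply: fine_le; rewrite ?finr //; exact: rearr_nonincr.
  - by rewrite -lee_fin fineK ?finr ?fM.
  - by move: x0; rewrite (lt_le_trans y0 xy).
have mG : measurable_fun (`]0%R, +oo[ : set R) (EFin \o G).
  by apply/measurable_EFinP; exact: nonincreasing_measurable.
apply: eq_measurable_fun mG => x; rewrite inE /= in_itv /= andbT => x0.
by rewrite /G x0 fineK ?finr.
Qed.

End rearr_facts.


Section blocks.
Context {R : realType}.
Variable b : nat -> R.
Hypothesis b0 : b 0 = 0.
Hypothesis bS : forall j, b j < b j.+1.
Hypothesis bU : forall t, exists j, t <= b j.

Lemma b_le i k : (i <= k)%N -> b i <= b k.
Proof.
move=> /subnK <-; elim: (k - i)%N => [|m ih]; first by rewrite add0n.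
by rewrite addSn (le_trans ih) // ltW.
Qed.

Lemma b_ge0 i : 0 <= b i.
Proof. by rewrite -b0 b_le. Qed.

Definition blk j : set R := `]b j, b j.+1].

Lemma blk_cover : \bigcup_j blk j = `]0, +oo[%classic.
Proof.
apply/seteqP; split => t.
  move=> [j _]; rewrite /blk /= !in_itv /= andbT => /andP[bt _].
  exact: le_lt_trans (b_ge0 j) bt.
rewrite /= in_itv /= andbT => t0.
have ex : exists j, t <= b j by exact: bU.
case: (ex_minnP ex) => j tj jmin.
have j0 : (0 < j)%N.
  rewrite lt0n; apply/eqP => j0; move: tj; rewrite j0 b0 leNgt t0; done.
exists j.-1 => //; rewrite /blk /= in_itv /= prednK // tj andbT.
rewrite ltNge; apply/negP => /jmin; rewrite -ltnS prednK // ltnn; done.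
Qed.

Lemma blk_triv : trivIset setT blk.
Proof.
move=> i j _ _ [t [/=]]; rewrite /blk /= !in_itv /= => /andP[it ti] /andP[jt tj].
apply/eqP; rewrite eqn_leq; apply/andP; split; rewrite leqNgt; apply/negP => h.
- by have := @b_le _ _ h; rewrite leNgt (lt_le_trans it tj).
- by have := @b_le _ _ h; rewrite leNgt (lt_le_trans jt ti).
Qed.

Local Open Scope ereal_scope.

Lemma int_blocks (F : cumulative R R) (g : R -> \bar R) :
  (forall t, (0 < t)%R -> 0 <= g t) ->
  measurable_fun (`]0%R, +oo[ : set R) g ->
  \int[lebesgue_stieltjes_measure F]_(t in (`]0%R, +oo[ : set R)) g t =
  \sum_(j <oo) \int[lebesgue_stieltjes_measure F]_(t in blk j) g t.
Proof.
move=> g0 mg; rewrite -blk_cover ge0_integral_bigcup //.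
- by move=> k; exact: measurable_itv.
- by rewrite blk_cover.
- by rewrite blk_cover => x; rewrite /= in_itv /= andbT; exact: g0.
- exact: blk_triv.
Qed.

End blocks.


Section blk_bounds.
Context {R : realType} (F : cumulative R R).
Local Open Scope ereal_scope.

Lemma blk_int_le (g : R -> \bar R) (a c u : R) : (a <= c)%R ->
  measurable_fun (`]a, c] : set R) g ->
  (forall t, (a < t <= c)%R -> 0 <= g t <= u%:E) ->
  \int[lebesgue_stieltjes_measure F]_(t in (`]a, c] : set R)) g t <= (u * (F c - F a))%:E.
Proof.
move=> ac mg gu.
apply: (@le_trans _ _ (\int[lebesgue_stieltjes_measure F]_(t in (`]a, c] : set R)) (cst u%:E) t)).
  apply: ge0_le_integral => //.
  - by move=> t; rewrite /= in_itv /= => /gu /andP[].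
  - by move=> t; rewrite /= in_itv /= => /gu /andP[].
by rewrite integral_cst //= ls_itv.
Qed.

Lemma blk_int_ge (g : R -> \bar R) (a c u : R) : (a <= c)%R -> (0 <= u)%R ->
  measurable_fun (`]a, c] : set R) g ->
  (forall t, (a < t <= c)%R -> u%:E <= g t) ->
  (u * (F c - F a))%:E <= \int[lebesgue_stieltjes_measure F]_(t in (`]a, c] : set R)) g t.
Proof.
move=> ac u0 mg gu.
apply: (@le_trans _ _ (\int[lebesgue_stieltjes_measure F]_(t in (`]a, c] : set R)) (cst u%:E) t)).
  by rewrite integral_cst //= ls_itv.
apply: ge0_le_integral => //.
Qed.

End blk_bounds.


Lemma abel_bound (R : realFieldType) (u P e : nat -> R) (c : R) :
  0 < c -> (forall j, 0 <= u j) -> (forall j, u j.+1 <= u j) ->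
  (forall j, 0 <= e j) -> (forall j, e j.+1 = 2 * e j) ->
  (forall j, c * e j <= P j) ->
  forall J, c * \sum_(j < J.+1) u j * e j <=
    2 * \sum_(j < J) u j.+1 * (P j.+1 - P j) + 2 * u 0%N * P 0%N.
Proof.
move=> c0 u0 un e0 eS cP J.
suff H : c * \sum_(j < J.+1) u j * e j - (2 * c * e J - 2 * P 0%N) * u J <=
   2 * (\sum_(j < J) u j.+1 * (P j.+1 - P j) - u J * (P J - P 0%N)) + 2 * u 0%N * P 0%N.
  have h1 : 0 <= u J * (P J - c * e J) by apply: mulr_ge0; rewrite // subr_ge0.
  lra.
elim: J => [|J IH].
  rewrite big_ord_recr big_ord0 /= add0r big_ord0.
  have h1 : 0 <= c * (u 0%N * e 0%N) by apply: mulr_ge0; [exact: ltW|exact: mulr_ge0].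
  lra.
rewrite [X in _ <= 2 * (X - _) + _]big_ord_recr [X in c * X - _]big_ord_recr /=.
have h2 : (c * e J.+1 - 2 * P 0%N) * (u J - u J.+1) <=
          2 * (P J - P 0%N) * (u J - u J.+1).
  apply: ler_wpM2r; first by rewrite subr_ge0.
  rewrite eS; have := cP J; lra.
rewrite eS in h2 *.
lra.
Qed.


Lemma psi_ok_of (R : realType) (psi : R -> R) :
  {in `[0, +oo[ &, {homo psi : x y / x <= y}} -> psi 0 = 0 -> psi_ok psi.
Proof.
move=> hpsi psi0; split.
  move=> x y; rewrite !in_itv /= !andbT => x0 y0 xy.
  by apply: hpsi; rewrite // in_itv /= andbT ltW.
move=> s s0; rewrite -psi0; apply: hpsi; rewrite ?in_itv /= ?lexx ?ltW //.
Qed.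

Lemma phi_ok (R : realType) (n : nat) : psi_ok (fun t : R => t `^ (n%:R)^-1).
Proof.
split; last by move=> s _; exact: powR_ge0.
move=> x y; rewrite !in_itv /= !andbT => x0 y0 xy.
exact: root_le (ltW x0) xy.
Qed.

Lemma phiF_upper (R : realType) (n : nat) (m : nat) : (0 < n)%N ->
  psiF (fun t : R => t `^ (n%:R)^-1) (2 ^+ (m * n)) <= 2 * 2 ^+ m.
Proof.
move=> n0.
have b0 : (0 : R) < 2 ^+ (m * n) by exact: exp2_gt0.
apply: le_trans (@psiF_le R _ (phi_ok R n) (2 ^+ (m * n)) (2 * 2 ^+ (m * n)) _) _.
  by rewrite max_l ?ltW // ltr_pMl // ltr1n.
rewrite (powRM _ (ler0n _ 2) (ltW b0)) pow_root //.
apply: ler_wpM2r; first exact/ltW/exp2_gt0.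
apply: ler1_powR; first by rewrite ler1n.
by rewrite invf_le1 ?ltr0n // ler1n.
Qed.


Lemma partB1 (R : realType) (n : nat) (psi : R -> R) :
  (0 < n)%N ->
  {in `[0, +oo[ &, {homo psi : x y / x <= y}} ->
  psi 0 = 0 ->
  (exists c : R, 0 < c /\ exists K, forall k, (K <= k)%N -> c * 2 ^+ k <= psi (2 ^+ (k * n))) ->
  Lambda psi `&` Linfty R `<=` Ln1 R n.
Proof.
move=> n0 hpsi psi0 [c [c0 [K cK]]] f [[mf normf] [_ [M hM]]].
have okpsi := @psi_ok_of R psi hpsi psi0.
have okphi := phi_ok R n.
split; first exact: mf.
set mu := rearr f.
set M' := Num.max M 0.
have muM t : 0 <= t -> (mu t <= M'%:E)%E by exact: rearr_linfty mf hM t.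
have mmu : measurable_fun (`]0%R, +oo[ : set R) mu.
  by apply: (@rearr_meas R f M') => t t0; exact: muM (ltW t0).
have mu0 t : (0 <= mu t)%E by exact: rearr_ge0.
have finmu t : 0 <= t -> mu t \is a fin_num.
  move=> t0; rewrite ge0_fin_numE //; apply: le_lt_trans (muM t t0) _.
  by rewrite ltey.
pose b j := if j is j'.+1 then (2 ^+ ((K + j') * n) : R) else 0.
have b0 : b 0%N = 0 by [].
have bpos j : 0 < b j.+1 by exact: exp2_gt0.
have bS j : b j < b j.+1.
  case: j => [|j] //; apply: exp2_lt.
  by rewrite ltn_pmul2r // addnS.
have bU t : exists j, t <= b j.
  have [k tk] := exists_exp2_gt t; exists k.+1; apply/ltW/(lt_le_trans tk).
  by apply: exp2_le; rewrite (leq_trans (leq_addl K k)) // leq_pmulr.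
pose u j := fine (mu (b j.+1)).
have u0 j : 0 <= u j by rewrite /u fine_ge0.
have uE j : mu (b j.+1) = (u j)%:E by rewrite /u fineK // finmu // ltW.
have un j : u j.+1 <= u j.
  rewrite -lee_fin -!uE; apply: rearr_nonincr; exact/ltW/bS.
have uM j : u j <= M' by rewrite -lee_fin -uE muM // ltW.
pose P j := psiF psi (b j.+1).
pose e j := (2 ^+ (K + j) : R).
have e0 j : 0 <= e j by exact/ltW/exp2_gt0.
have eS j : e j.+1 = 2 * e j by rewrite /e addnS exprS.
have cP j : c * e j <= P j.
  apply: le_trans (cK (K + j)%N (leq_addr _ _)) _.
  exact: psiF_ge.
have L0 : (0 <= lorentz_norm psi f)%E by apply: integral_ge0 => t _; exact: mu0.
have Lfin : lorentz_norm psi f \is a fin_num by rewrite ge0_fin_numE.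
set N := fine (lorentz_norm psi f).
have mblk a z : 0 <= a -> measurable_fun (`]a, z] : set R) mu.
  move=> a0; apply: (measurable_funS (measurable_itv _) _ mmu).
  move=> t; rewrite /= !in_itv /= andbT => /andP[ha _]; exact: le_lt_trans ha.
have mu0' t : 0 < t -> (0 <= mu t)%E by move=> _; exact: mu0.
have Lsum := @int_blocks R b b0 bS bU (psiF psi) mu mu0' mmu.
have BN J : \sum_(0 <= j < J) u j.+1 * (P j.+1 - P j) <= N.
  rewrite -lee_fin -sumEFin.
  apply: (@le_trans _ _ (\sum_(0 <= j < J) \int[lebesgue_stieltjes_measure (psiF psi)]_(t in blk b j.+1) mu t)%E).
    apply: lee_sum => j _; rewrite /blk.
    apply: blk_int_ge; [exact/ltW/bS|exact: u0|exact: mblk (ltW (bpos j))|].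
    move=> t /andP[_ tb]; rewrite -uE; exact: rearr_nonincr.
  apply: (@le_trans _ _ (\sum_(0 <= j < J.+1) \int[lebesgue_stieltjes_measure (psiF psi)]_(t in blk b j) mu t)%E).
    rewrite big_nat_recl //; apply: leeDr; apply: integral_ge0 => t _; exact: mu0.
  rewrite /N fineK // /lorentz_norm -/mu Lsum.
  apply: nneseries_lim_ge => k _ _; apply: integral_ge0 => t _; exact: mu0.
pose phi := (fun t : R => t `^ (n%:R)^-1).
have Lsum2 := @int_blocks R b b0 bS bU (psiF phi) mu mu0' mmu.
rewrite /lorentz_norm -/mu Lsum2.
have P00 : 0 <= P 0%N by exact: psiF_ge0.
have N0 : 0 <= N by rewrite /N fine_ge0.
have Fb1 : 0 <= psiF phi (b 1%N) - psiF phi (b 0%N).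
  by rewrite subr_ge0; apply: psiF_nd; exact/ltW/bS.
pose C := M' * (psiF phi (b 1%N) - psiF phi (b 0%N)) + 4 * ((2 * N + 2 * u 0%N * P 0%N) / c).
have M'0 : 0 <= M' by rewrite le_max lexx orbT.
have C0 : 0 <= C.
  rewrite /C; apply: addr_ge0; first exact: mulr_ge0.
  apply: mulr_ge0 => //; apply: divr_ge0; last exact: ltW.
  apply: addr_ge0; first exact: mulr_ge0.
  by apply: mulr_ge0 => //; apply: mulr_ge0.
apply: (@le_lt_trans _ _ C%:E); last exact: ltey.
apply: lime_le.
  by apply: is_cvg_nneseries => k _ _; apply: integral_ge0 => t _; exact: mu0.
apply: nearW => k.
case: k => [|J]; first by rewrite big_geq // lee_fin.
rewrite big_nat_recl //.
have h0 : (\int[lebesgue_stieltjes_measure (psiF phi)]_(t in blk b 0) mu t <=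
    (M' * (psiF phi (b 1%N) - psiF phi (b 0%N)))%:E)%E.
  rewrite /blk; apply: blk_int_le; [exact/ltW/bS|exact: mblk|].
  by move=> t /andP[t0 _]; rewrite mu0 muM // ltW.
have hj : (\sum_(0 <= j < J) \int[lebesgue_stieltjes_measure (psiF phi)]_(t in blk b j.+1) mu t <=
    (\sum_(0 <= j < J) u j * (4 * e j))%:E)%E.
  rewrite -sumEFin; apply: lee_sum => j _; rewrite /blk.
  apply: le_trans (@blk_int_le R (psiF phi) mu (b j.+1) (b j.+2) (u j) _ _ _) _.
  - exact/ltW/bS.
  - exact: mblk (ltW (bpos j)).
  - move=> t /andP[bt _]; rewrite mu0 /= -uE; apply: rearr_nonincr; exact: ltW.
  rewrite lee_fin; apply: ler_wpM2l => //.
  have h1 : psiF phi (b j.+2) <= 2 * 2 ^+ (K + j.+1) by exact: phiF_upper.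
  have h2 : 0 <= psiF phi (b j.+1) by exact: psiF_ge0.
  have h3 : (2 : R) ^+ (K + j.+1) = 2 * e j by rewrite -eS.
  have h4 : 2 * 2 ^+ (K + j.+1) = 4 * e j :> R by rewrite h3 mulrA -natrM.
  by rewrite -h4 lerBlDr (le_trans h1) // lerDl.
have hA : c * \sum_(j < J.+1) u j * e j <= 2 * N + 2 * u 0%N * P 0%N.
  apply: le_trans (@abel_bound R u P e c c0 u0 un e0 eS cP J) _.
  have := BN J; rewrite big_mkord => h; lra.
have hA' : \sum_(0 <= j < J) u j * (4 * e j) <= 4 * ((2 * N + 2 * u 0%N * P 0%N) / c).
  have -> : \sum_(0 <= j < J) u j * (4 * e j) = 4 * \sum_(0 <= j < J) u j * e j.
    by rewrite mulr_sumr; apply: eq_bigr => j _; rewrite mulrCA.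
  apply: ler_wpM2l => //.
  rewrite ler_pdivlMr // mulrC; apply: le_trans hA.
  apply: ler_wpM2l; first exact: ltW.
  rewrite big_mkord big_ord_recr /= lerDl.
  by apply: mulr_ge0.
rewrite /C EFinD; apply: leeD => //.
by apply: le_trans hj _; rewrite lee_fin.
Qed.


Lemma geom_half (R : realFieldType) k : \sum_(0 <= j < k) ((2 : R) ^+ j)^-1 = 2 - 2 * ((2 : R) ^+ k)^-1.
Proof.
elim: k => [|k IH]; first by rewrite big_geq // expr0 invr1 mulr1 subrr.
rewrite big_nat_recr //= IH exprS invfM.
have h2 : (2 : R) != 0 by rewrite pnatr_eq0.
set x := (2 ^+ k)^-1.
rewrite mulrA mulfV // mul1r; ring.
Qed.

Lemma rearr_le_self (R : realType) (f : R -> R) (t : R) :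
  measurable_fun (`]0%R, +oo[ : set R) f ->
  nonincreasing_fun f -> (forall u, 0 <= f u) -> 0 < t ->
  (rearr f t <= (f t)%:E)%E.
Proof.
move=> mf fni f0 t0; apply: rearr_le => //.
apply: (@le_trans _ _ (lebesgue_measure (`]0, t] : set R))).
  apply: le_measure; rewrite ?inE; [exact: distrib_set_meas|exact: measurable_itv|].
  move=> u [/= u0 fu]; rewrite /= in_itv /= u0 /=.
  rewrite leNgt; apply/negP => tu.
  by move: fu; rewrite ger0_norm // ltNge fni // ltW.
by rewrite lebesgue_measure_itv /= lte_fin t0 oppr0 adde0.
Qed.

Lemma rearr_ge_block (R : realType) (f : R -> R) (t a s0 : R) :
  measurable_fun (`]0%R, +oo[ : set R) f ->
  (forall u, 0 < u < a -> s0 <= `|f u|) -> 0 < t -> t < a ->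
  (s0%:E <= rearr f t)%E.
Proof.
move=> mf fa t0 ta; apply: rearr_ge => s s0' ss0.
apply: (@lt_le_trans _ _ (lebesgue_measure (`]0, a[ : set R))).
  by rewrite lebesgue_measure_itv /= lte_fin (lt_trans t0 ta) oppr0 adde0 lte_fin.
apply: le_measure; rewrite ?inE; [exact: measurable_itv|exact: distrib_set_meas|].
move=> u; rewrite /= in_itv /= => /andP[u0 ua]; split => //=.
by apply: lt_le_trans ss0 _; apply: fa; rewrite u0.
Qed.


Lemma partB2 (R : realType) (n : nat) (psi : R -> R) :
  (0 < n)%N ->
  {in `[0, +oo[ &, {homo psi : x y / x <= y}} ->
  concave_on_nonneg psi ->
  psi 0 = 0 ->
  (forall e : R, 0 < e -> forall N, exists m, (N <= m)%N /\ psi (2 ^+ (m * n)) / 2 ^+ m < e) ->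
  ~ (Lambda psi `&` Linfty R `<=` Ln1 R n).
Proof.
move=> n0 hpsi hc psi0 H.
have okpsi := @psi_ok_of R psi hpsi psi0.
have okphi := phi_ok R n.
have psi_ge0 t : 0 <= t -> 0 <= psi t.
  by move=> t0; rewrite -psi0 hpsi // in_itv /= ?lexx ?t0.
have psi2 x : 0 <= x -> psi (2 * x) <= 2 * psi x.
  move=> x0.
  have h2 : (2 : R) != 0 by rewrite pnatr_eq0.
  have i0 : (0 : R) <= 2^-1 by rewrite invr_ge0 ler0n.
  have i1 : (2 : R)^-1 <= 1 by rewrite invf_le1 ?ltr0n // ler1n.
  have h := hc (2 * x) 0 2^-1 (mulr_ge0 (ler0n _ 2) x0) (lexx 0) i0 i1.
  rewrite psi0 !mulr0 !addr0 mulrA mulVf // mul1r in h.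
  by rewrite -ler_pdivrMl ?ltr0n // mulrC.
have sel N j : {m : nat | (N <= m)%N /\ psi (2 ^+ (m * n)) / 2 ^+ m < ((2 : R) ^+ j)^-1}.
  by apply: cid; apply: H; rewrite invr_gt0 exp2_gt0.
pose m := fix mm (j : nat) : nat :=
  if j is j'.+1 then sval (sel (mm j' + 4)%N j) else sval (sel 4%N 0%N).
have mS j : (m j + 4 <= m j.+1)%N by exact: (svalP (sel _ _)).1.
have m0 : (4 <= m 0%N)%N by exact: (svalP (sel _ _)).1.
have mh j : psi (2 ^+ (m j * n)) / 2 ^+ (m j) < ((2 : R) ^+ j)^-1.
  by case: j => [|j]; exact: (svalP (sel _ _)).2.
have mlt i k : (i < k)%N -> (m i + 4 <= m k)%N.
  move=> /subnK <-; elim: (k - i.+1)%N => [|d ih]; first by rewrite add0n mS.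
  by rewrite addSn (leq_trans ih) // (leq_trans _ (mS _)) // leq_addr.
have mle i k : (i <= k)%N -> (m i <= m k)%N.
  rewrite leq_eqVlt => /orP[/eqP -> //|/mlt h]; exact: leq_trans (leq_addr _ _) h.
have mj j : (j <= m j)%N.
  elim: j => [|j ih] //; have := mS j; lia.
pose a j : R := 2 ^+ (m j * n).
have a_gt0 j : 0 < a j by exact: exp2_gt0.
have a_le i k : (i <= k)%N -> a i <= a k.
  by move=> ik; apply: exp2_le; rewrite leq_mul2r mle ?orbT.
have a_half j : a j * 2 <= a j.+1.
  rewrite /a -exprSr; apply: exp2_le.
  have := mS j; have : (1 <= n)%N by []; nia.
have exA t : exists j, t < a j.
  have [k tk] := exists_exp2_gt t; exists k; apply: (lt_le_trans tk).
  by apply: exp2_le; rewrite (leq_trans (mj k)) // leq_pmulr.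
pose J t := ex_minn (exA t).
have JP t : t < a (J t) by rewrite /J; case: ex_minnP.
have Jmin t j : t < a j -> (J t <= j)%N by rewrite /J; case: ex_minnP => k _ h /h.
have Jmono t t' : t <= t' -> (J t <= J t')%N.
  by move=> tt'; apply: Jmin; exact: le_lt_trans tt' (JP t').
pose f t : R := ((2 : R) ^+ (m (J t)))^-1.
have f0 t : 0 < f t by rewrite invr_gt0 exp2_gt0.
have f1 t : f t <= 1 by rewrite invf_le1 ?exp2_gt0 // exprn_ege1 // ler1n.
have fni : nonincreasing_fun f.
  move=> t t' tt'; rewrite /f lef_pV2 ?posrE ?exp2_gt0 //.
  by apply: exp2_le; apply: mle; exact: Jmono.
have mf : measurable_fun (`]0%R, +oo[ : set R) f by exact: nonincreasing_measurable.
have fa j u : u < a j -> ((2 : R) ^+ m j)^-1 <= f u.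
  move=> uj; rewrite /f lef_pV2 ?posrE ?exp2_gt0 //.
  by apply: exp2_le; apply: mle; exact: Jmin.
pose b j := if j is j'.+1 then a j' else 0.
have fb j u : b j < u -> f u <= ((2 : R) ^+ m j)^-1.
  move=> bu; rewrite /f lef_pV2 ?posrE ?exp2_gt0 //.
  apply: exp2_le; apply: mle.
  case: j bu => [//|j] /= ju; rewrite leqNgt; apply/negP => Jj.
  have Jj' : (J u <= j)%N by rewrite -ltnS.
  by move: (JP u); rewrite ltNge (le_trans (a_le _ _ Jj')) // ltW.
move=> sub.
have fLinf : Linfty R f.
  split => //; exists 1; rewrite (_ : _ `&` _ = set0) ?measure0 //.
  apply/seteqP; split => [x [_ /=]|x //].
  by rewrite ger0_norm ?(ltW (f0 x)) // ltNge f1.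
set mu := rearr f.
have mu0 t : (0 <= mu t)%E by exact: rearr_ge0.
have muf t : 0 < t -> (mu t <= (f t)%:E)%E.
  by move=> t0; apply: rearr_le_self => // u; exact: ltW.
have mmu : measurable_fun (`]0%R, +oo[ : set R) mu.
  apply: (@rearr_meas R f 1) => t t0; apply: le_trans (muf t t0) _.
  by rewrite lee_fin.
have b0 : b 0%N = 0 by [].
have bS j : b j < b j.+1.
  case: j => [|j] /=; first exact: a_gt0.
  by apply: lt_le_trans (a_half j); rewrite ltr_pMr ?a_gt0 // ltr1n.
have bU t : exists j, t <= b j.
  by have [j tj] := exA t; exists j.+1; exact: ltW.
have bge0 j : 0 <= b j by case: j => [|j] //=; exact: ltW.
have mu0' t : 0 < t -> (0 <= mu t)%E by move=> _; exact: mu0.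
have mblk x z : 0 <= x -> measurable_fun (`]x, z] : set R) mu.
  move=> x0; apply: (measurable_funS (measurable_itv _) _ mmu).
  move=> t; rewrite /= !in_itv /= andbT => /andP[ha _]; exact: le_lt_trans ha.
have Lpsi : (lorentz_norm psi f < +oo)%E.
  rewrite /lorentz_norm -/mu (@int_blocks R b b0 bS bU (psiF psi) mu mu0' mmu).
  apply: (@le_lt_trans _ _ 4%:E); last exact: ltey.
  apply: lime_le.
    by apply: is_cvg_nneseries => k _ _; apply: integral_ge0 => t _; exact: mu0.
  apply: nearW => k.
  apply: (@le_trans _ _ (\sum_(0 <= j < k) (2 * ((2:R) ^+ j)^-1)%:E)%E).
    apply: lee_sum => j _; rewrite /blk.
    apply: le_trans (@blk_int_le R (psiF psi) mu (b j) (b j.+1) (((2:R) ^+ m j)^-1) _ _ _) _.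
    - exact/ltW/bS.
    - exact: mblk (bge0 j).
    - move=> t /andP[bt tb]; rewrite mu0 /=.
      have t0 : 0 < t by exact: le_lt_trans (bge0 j) bt.
      by apply: le_trans (muf t t0) _; rewrite lee_fin; exact: fb.
    rewrite lee_fin /=.
    have q0 : 0 < ((2:R) ^+ m j)^-1 by rewrite invr_gt0 exp2_gt0.
    have h1 : psiF psi (a j) <= psi (2 * a j).
      apply: psiF_le => //; rewrite max_l ?ltW ?a_gt0 //.
      by rewrite ltr_pMl ?a_gt0 // ltr1n.
    have h2 := psi2 (a j) (ltW (a_gt0 j)).
    have h3 : 0 <= psiF psi (b j) by exact: psiF_ge0.
    have h4 : psiF psi (a j) - psiF psi (b j) <= 2 * psi (a j) by lra.
    apply: le_trans (ler_wpM2l (ltW q0) h4) _.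
    rewrite mulrCA; apply: ler_wpM2l => //.
    by rewrite mulrC; exact: ltW (mh j).
  rewrite sumEFin lee_fin -mulr_sumr geom_half.
  have : 0 <= ((2 : R) ^+ k)^-1 by rewrite invr_ge0 ltW ?exp2_gt0.
  lra.
have [_ Lphi] := sub f (conj (conj mf Lpsi) fLinf).
pose phi := (fun t : R => t `^ (n%:R)^-1).
have p16 j : (2 : R) ^+ m j * 16 <= 2 ^+ m j.+1.
  have -> : (16 : R) = 2 ^+ 4 by rewrite -natrX.
  by rewrite -exprD; apply: exp2_le; exact: mS.
have blk_lb j : ((4^-1 : R)%:E <= \int[lebesgue_stieltjes_measure (psiF phi)]_(t in blk b j) mu t)%E.
  rewrite /blk.
  have aj0 := a_gt0 j.
  have bh : b j <= a j / 2.
    case: j aj0 => [|j] aj0 /=; first by rewrite divr_ge0 ?ltW // ler0n.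
    by rewrite ler_pdivlMr ?ltr0n //; exact: a_half.
  have ah : a j / 2 <= b j.+1 by rewrite /= ler_pdivrMr ?ltr0n // ler_pMr // ler1n.
  have hsub : (`]b j, a j / 2] : set R) `<=` `]b j, b j.+1].
    move=> t; rewrite /= !in_itv /= => /andP[-> /le_trans]; exact.
  apply: le_trans _ (ge0_subset_integral (lebesgue_stieltjes_measure (psiF phi)) (measurable_itv _) (measurable_itv _) (mblk _ _ (bge0 j)) (fun x _ => mu0 x) hsub).
  apply: le_trans _ (@blk_int_ge R (psiF phi) mu (b j) (a j / 2) (((2:R) ^+ m j)^-1) bh _ (mblk _ _ (bge0 j)) _).
  - set p := (2 : R) ^+ m j.
    have p0 : 0 < p by exact: exp2_gt0.
    have hl : p / 2 <= psiF phi (a j / 2).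
      have ah0 : 0 < a j / 2 by rewrite divr_gt0 ?ltr0n.
      apply: le_trans _ (@psiF_ge R phi okphi _ ah0).
      have i0 : (0 : R) <= 2^-1 by rewrite invr_ge0 ler0n.
      rewrite /phi (powRM _ (ltW aj0) i0) /a pow_root //.
      apply: ler_wpM2l; first exact: ltW.
      apply: ger1_powR; first by rewrite invr_gt0 ltr0n invf_le1 ?ltr0n // ler1n.
      by rewrite invf_le1 ?ltr0n // ler1n.
    have hr : psiF phi (b j) <= p / 4.
      case: j @p p0 aj0 bh ah hsub hl => [|j] p p0 _ _ _ _ hl /=.
        apply: le_trans (@psiF_le R _ okphi 0 1 _) _; first by rewrite max_l // ltr01.
        rewrite /phi powR1 ler_pdivlMr ?ltr0n // mul1r /p.
        by apply: le_trans _ (@exp2_le R _ _ m0); rewrite -natrX ler_nat.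
      apply: le_trans (@phiF_upper R n (m j) n0) _.
      have := p16 j; rewrite -/p => h; lra.
    rewrite lee_fin.
    have -> : (4^-1 : R) = p^-1 * (p / 4) by rewrite mulrA mulVf ?gt_eqF // mul1r.
    apply: ler_wpM2l; first by rewrite invr_ge0 ltW.
    apply: le_trans _ (lerB hl hr).
    by rewrite (_ : p / 2 - p / 4 = p / 4) //; field.
  - by rewrite invr_ge0 ltW ?exp2_gt0.
  - move=> t /andP[bt ta].
    have t0 : 0 < t by exact: le_lt_trans (bge0 j) bt.
    apply: (@rearr_ge_block R f t (a j)) => //.
    + move=> x /andP[x0 xa]; rewrite ger0_norm; [exact: fa|exact: ltW (f0 x)].
    + by apply: le_lt_trans ta _; rewrite ltr_pdivrMr ?ltr0n // ltr_pMr // ltr1n.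
have Lge k : (((k%:R : R) * 4^-1)%:E <= lorentz_norm phi f)%E.
  rewrite /lorentz_norm -/mu (@int_blocks R b b0 bS bU (psiF phi) mu mu0' mmu).
  apply: le_trans (nneseries_lim_ge k _); last first.
    by move=> i _ _; apply: integral_ge0 => t _; exact: mu0.
  apply: (@le_trans _ _ (\sum_(0 <= j < k) (4^-1 : R)%:E)%E); last first.
    by apply: lee_sum => j _; exact: blk_lb.
  by rewrite sumEFin sumr_const_nat subn0 mulr_natl.
have L0 : (0 <= lorentz_norm phi f)%E by apply: integral_ge0 => t _; exact: mu0.
have Lfin : lorentz_norm phi f \is a fin_num by rewrite ge0_fin_numE.
set L := fine (lorentz_norm phi f).
have := Lge (4 * Num.bound L)%N; rewrite -(fineK Lfin) -/L lee_fin.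
rewrite natrM mulrAC mulfV ?pnatr_eq0 // mul1r => h.
have := archi_boundP (fine_ge0 L0); rewrite -/L => h'.
by move: (le_lt_trans h h'); rewrite ltxx.
Qed.

Theorem lemma4p4 (R : realType) (n : nat) (psi : R -> R) :
  (0 < n)%N ->
  {in `[0, +oo[ &, {homo psi : x y / x <= y}} ->
  concave_on_nonneg psi ->
  psi 0 = 0 ->
  [/\ (~ (Lambda psi `&` Linfty R `<=` Ln1 R n) <->
         liminf_pinfty (fun t : R => (psi t / t `^ (n%:R)^-1)%:E) = 0%E),
      (liminf_pinfty (fun t : R => (psi t / t `^ (n%:R)^-1)%:E) = 0%E <->
         limn_einf (fun m : nat => (psi (2 ^+ (m * n)) / 2 ^+ m)%:E) = 0%E) &
      (~ (Lambda psi `&` Linfty R `<=` Ln1 R n) <->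
         limn_einf (fun m : nat => (psi (2 ^+ (m * n)) / 2 ^+ m)%:E) = 0%E)].
Proof.
move=> n0 hpsi hc psi0.
have e23 := @part_ii_iii R n psi n0 hpsi psi0.
have psi_ge0 t : 0 <= t -> 0 <= psi t.
  by move=> t0; rewrite -psi0 hpsi // in_itv /= ?lexx ?t0.
have h0 m : 0 <= psi (2 ^+ (m * n)) / 2 ^+ m.
  by rewrite divr_ge0 ?psi_ge0 ?exprn_ge0 // ltW.
have e13 : ~ (Lambda psi `&` Linfty R `<=` Ln1 R n) <->
    limn_einf (fun m : nat => (psi (2 ^+ (m * n)) / 2 ^+ m)%:E) = 0%E.
  rewrite (@limn_einf0 R _ h0); split.
  - move=> nsub e e0 N.
    case: (pselect (exists m, (N <= m)%N /\ psi (2 ^+ (m * n)) / 2 ^+ m < e)) => // hne.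
    exfalso; apply: nsub; apply: (@partB1 R n psi n0 hpsi psi0).
    exists e; split => //; exists N => k Nk.
    have : ~ (psi (2 ^+ (k * n)) / 2 ^+ k < e) by move=> hk; apply: hne; exists k.
    move/negP; rewrite -leNgt ler_pdivlMr ?exp2_gt0 //.
  - by move=> H; apply: (@partB2 R n psi n0 hpsi hc psi0).
split.
- exact: iff_trans e13 (iff_sym e23).
- exact: e23.
- exact: e13.
Qed.
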